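(* Let $\Phi$ be a natural rational associator. Then $I_\Phi(\tilde K)\in\mathrm{Chord}_{nat}$ for every knot diagram $\tilde K$ (together with its decomposition into elementary pieces).
   Context: $b_p(n)=\big[\frac{p}{(p-1)^2}n-\frac1{p-1}\big]$ ($[\cdot]$ integer part) and $D(n)=\prod_{p\text{ prime},p\le n+1}p^{b_p(n)}$. A rational associator $\Phi\in\mathrm{Assoc}_1(\mathbb{Q})$ (group-like $\Phi\in\mathbb{Q}\langle\!\langle x,y\rangle\!\rangle$ with $\Phi(x,y)=\Phi(y,x)^{-1}$, $e^{x/2}\Phi(z,x)e^{z/2}\Phi(y,z)e^{y/2}\Phi(x,y)=1$ for $x+y+z=0$, and the pentagon $\Phi(t_{1,2},t_{2,3}+t_{2,4})\Phi(t_{1,3}+t_{2,3},t_{3,4})=\Phi(t_{2,3},t_{3,4})\Phi(t_{1,2}+t_{1,3},t_{2,4}+t_{3,4})\Phi(t_{1,2},t_{2,3})$ in the completed group of infinitesimal braids on 4 strands) is natural if $\Phi\in1+\sum_{n\ge1}p^{-b_p(n)}\mathbb{Z}_p\langle x,y\rangle^n$ for every prime $p$. Chord diagrams: oriented circle with disjoint pairs of points joined by chords, up to orientation-preserving diffeomorphism; $\mathrm{Chord}(\mathbb{Q})$ is the completed span modulo the 4T relation and the one-term relation (diagrams with an isolated chord, whose endpoints are adjacent on the circle, vanish), graded by number of chords, with connected-sum product; $\mathrm{Chord}_n(\mathbb{Z})$ the integral lattice in degree $n$; $\mathrm{Chord}_{nat}=\sum_{n\ge0}D(n)^{-1}\mathrm{Chord}_n(\mathbb{Z})$.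 $I_\Phi(\tilde K)$: for a knot diagram $\tilde K$ in general position (transversal simple crossings, height Morse, distinct critical and crossing heights) decomposed into elementary pieces — maxima, minima, positive/negative crossings, and three-strand re-bracketing pieces $c,c^{-1}$ — decorate crossings with $\exp(\pm t/2)$ ($t$ the horizontal chord between the two strands), $c$ with $\Phi(t_{1,2},t_{2,3})$ and $c^{-1}$ with $\Phi(t_{1,2},t_{2,3})^{-1}$ ($t_{i,j}$ the horizontal chord between strands $i,j$), maxima/minima with nothing, with a sign $(-1)^k$ when the orientation of a strand carrying $k$ chord endpoints is reversed; the resulting element of $\mathrm{Chord}(\mathbb{Q})$ is $I_\Phi(\tilde K)$. *)

(* Defs.v *)
From HB Require Import structures.
From mathcomp Require Import all_boot all_order all_algebra.
From Stdlib Require List.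
Set Implicit Arguments. Unset Strict Implicit. Unset Printing Implicit Defensive.
Import Order.TTheory GRing.Theory Num.Theory.
Local Open Scope ring_scope.

(* Formal noncommutative power series over rat in the letters A:       *)
(* a series is its coefficient function on words.                      *)
Definition ser (A : Type) := seq A -> rat.

Definition sone (A : eqType) : ser A := fun w => (w == [::])%:R.

Definition smul (A : Type) (f g : ser A) : ser A :=
  fun w => \sum_(i < (size w).+1) f (take i w) * g (drop i w).

(* multiplicative inverse of a series with invertible constant term
   (the unique g with f g = 1) *)
Fixpoint sinv_aux (A : Type) (f : ser A) (n : nat) (w : seq A) : rat :=
  match n with
  | 0 => (f [::])^-1
  | n'.+1 =>
      if w is [::] then (f [::])^-1 else
      - (f [::])^-1 * \sum_(i < size w) f (take i.+1 w) * sinv_aux f n' (drop i.+1 w)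
  end.
Definition sinv (A : Type) (f : ser A) : ser A := fun w => sinv_aux f (size w) w.

(* Phi(a,b): substitute the linear forms a (for x = false) and
   b (for y = true) into a series Phi in Q<<x,y>>; a linear form
   L : A -> rat stands for sum_l L(l) * l. *)
Definition ssubst (A : Type) (f : ser bool) (a b : A -> rat) : ser A :=
  fun w => \sum_(u : (size w).-tuple bool)
      f u * \prod_(j < size w) (if tnth u j then b else a) (tnth (in_tuple w) j).

Definition sexp (A : Type) (c : A -> rat) : ser A :=
  fun w => (\prod_(j < size w) c (tnth (in_tuple w) j)) / (size w)`!%:R.

Definition addl (A : Type) (L1 L2 : A -> rat) : A -> rat := fun g => L1 g + L2 g.
Definition halfl (A : Type) (L : A -> rat) : A -> rat := fun g => L g / 2.

(* letters of Q<<x,y>>: false = x, true = y *)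
Definition xf : bool -> rat := fun l => if l then 0 else 1.
Definition yf : bool -> rat := fun l => if l then 1 else 0.
Definition zf : bool -> rat := fun _ => -1.   (* z = -x-y *)

(* group-like: Delta Phi = Phi (x) Phi with x,y primitive, written out on
   coefficients (coefficient of u (x) v in Delta Phi), and eps(Phi) = 1 *)
Definition grouplike (f : ser bool) : Prop :=
  f [::] = 1 /\
  forall u v : seq bool,
    f u * f v =
    \sum_(w : (size u + size v).-tuple bool) \sum_(m : (size u + size v).-tuple bool)
       (if (mask m w == u) && (mask (map negb m) w == v) then f w else 0).

(* Phi(x,y) = Phi(y,x)^{-1} *)
Definition assoc_antisym (f : ser bool) : Prop :=
  forall w, f w = sinv (ssubst f yf xf) w.

(* e^{x/2} Phi(z,x) e^{z/2} Phi(y,z) e^{y/2} Phi(x,y) = 1, z = -x-y *)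
Definition assoc_hexagon (f : ser bool) : Prop :=
  forall w,
    smul (sexp (halfl xf)) (smul (ssubst f zf xf) (smul (sexp (halfl zf))
      (smul (ssubst f yf zf) (smul (sexp (halfl yf)) (ssubst f xf yf))))) w
    = sone w.

(* Infinitesimal braids on 4 strands: generators t_{ij}, i<j, strands 0..3 *)
Definition gen4 := {p : 'I_4 * 'I_4 | (p.1 < p.2)%N}.

Definition tl (i j : 'I_4) : gen4 -> rat :=
  fun g => ((((val g).1 == i) && ((val g).2 == j)) ||
            (((val g).1 == j) && ((val g).2 == i)))%:R.
Definition t4 (i j : nat) : gen4 -> rat := tl (inord i) (inord j).

(* a generator u * [L1,L2] * v of the two-sided ideal of relations of the
   infinitesimal braid algebra: kind = true : [t_ij, t_ik + t_jk], i,j,k distinct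
                               kind = false: [t_ij, t_kl], i,j,k,l distinct *)
Record igen := IGen { ig_c : rat; ig_u : seq gen4; ig_i : 'I_4; ig_j : 'I_4;
                      ig_k : 'I_4; ig_l : 'I_4; ig_kind : bool; ig_v : seq gen4 }.

Definition igen_ok (x : igen) : Prop :=
  if ig_kind x then uniq [:: ig_i x; ig_j x; ig_k x]
  else uniq [:: ig_i x; ig_j x; ig_k x; ig_l x].

Definition igen_forms (x : igen) : (gen4 -> rat) * (gen4 -> rat) :=
  if ig_kind x then (tl (ig_i x) (ig_j x), addl (tl (ig_i x) (ig_k x)) (tl (ig_j x) (ig_k x)))
  else (tl (ig_i x) (ig_j x), tl (ig_k x) (ig_l x)).

(* coefficient of the word w in u [L1,L2] v *)
Definition igen_coef (x : igen) (w : seq gen4) : rat :=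
  let: (L1, L2) := igen_forms x in
  if (size w == size (ig_u x) + 2 + size (ig_v x))%N
     && (take (size (ig_u x)) w == ig_u x)
     && (drop (size (ig_u x)).+2 w == ig_v x)
  then match drop (size (ig_u x)) w with
       | g1 :: g2 :: _ => L1 g1 * L2 g2 - L2 g1 * L1 g2
       | _ => 0
       end
  else 0.

(* e is zero in the completed algebra of infinitesimal braids on 4 strands:
   every homogeneous component lies in the (graded) ideal of relations *)
Definition zero_in_braids4 (e : ser gen4) : Prop :=
  forall n : nat, exists l : seq igen,
    List.Forall igen_ok l /\
    forall w : seq gen4, size w = n -> e w = \sum_(x <- l) ig_c x * igen_coef x w.

Definition assoc_pentagon (f : ser bool) : Prop :=
  zero_in_braids4 (fun w =>
    smul (ssubst f (t4 0 1) (addl (t4 1 2) (t4 1 3)))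
         (ssubst f (addl (t4 0 2) (t4 1 2)) (t4 2 3)) w
    - smul (ssubst f (t4 1 2) (t4 2 3))
        (smul (ssubst f (addl (t4 0 1) (t4 0 2)) (addl (t4 1 3) (t4 2 3)))
              (ssubst f (t4 0 1) (t4 1 2))) w).

Definition rational_associator (f : ser bool) : Prop :=
  [/\ grouplike f, assoc_antisym f, assoc_hexagon f & assoc_pentagon f].

Definition bp (p n : nat) : int :=
  Num.floor ((p%:R / ((p%:R - 1) ^+ 2)) * n%:R - 1 / (p%:R - 1) : rat).

Definition Dn (n : nat) : rat := \prod_(p < n.+2 | prime p) (p%:R : rat) ^ (bp p n).

Definition padic_int (p : nat) (q : rat) : bool := ~~ (p %| absz (denq q))%N.

(* Phi in 1 + sum_{n>=1} p^{-b_p(n)} Z_p<x,y>^n for every prime p *)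
Definition natural_coeffs (f : ser bool) : Prop :=
  f [::] = 1 /\
  forall (p : nat) (w : seq bool), prime p -> (1 <= size w)%N ->
    padic_int p (f w * (p%:R : rat) ^ (bp p (size w))).

Definition natural_associator (f : ser bool) : Prop :=
  rational_associator f /\ natural_coeffs f.

(* Chord diagrams.  A chord diagram with n chords is presented by a word *)
(* of length 2n (endpoint labels read along the oriented circle from a  *)
(* base point); each label occurs exactly twice.                        *)
Definition valid_cd (s : seq nat) : bool := all (fun x => count_mem x s == 2%N) s.

(* formal Q-linear combinations of presented diagrams *)
Definition fsum := seq (rat * seq nat).
Definition fcoef (X : fsum) (w : seq nat) : rat := \sum_(x <- X | x.2 == w) x.1.
Definition fscale (c : rat) (X : fsum) : fsum := [seq (c * x.1, x.2) | x <- X].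

(* generators of the relations defining Chord(Q) on presented diagrams:
   change of base point, change of labels, one-term relation, 4T relation *)
Inductive cdrel :=
| CRot of nat & seq nat
| CRelab of (nat -> nat) & seq nat
| C1T of seq nat & seq nat & nat
| C4T of nat & nat & seq nat & seq nat & seq nat & 'I_3 & 'I_3 & 'I_3.

Definition pick3 (S : seq nat * seq nat * seq nat) (j : 'I_3) : seq nat :=
  if val j == 0%N then S.1.1 else if val j == 1%N then S.1.2 else S.2.

(* the four terms of [t12, t13 + t23] = t12 t13 + t12 t23 - t13 t12 - t23 t12
   on three arcs S1,S2,S3 of the circle (u : chord S1-S2, v : the other one) *)
Definition fourT_word (u v : nat) (P0 P1 P2 : seq nat) (a b c : 'I_3) (q : nat) :=
  let S := match q with
           | 0 => ([:: u; v], [:: u], [:: v])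
           | 1 => ([:: u], [:: u; v], [:: v])
           | 2 => ([:: v; u], [:: u], [:: v])
           | _ => ([:: u], [:: v; u], [:: v])
           end in
  pick3 S a ++ P0 ++ pick3 S b ++ P1 ++ pick3 S c ++ P2.

Definition cdrel_ok (r : cdrel) : Prop :=
  match r with
  | CRot x s => valid_cd (x :: s)
  | CRelab f s => valid_cd s /\ {in s &, injective f}
  | C1T a b x => valid_cd (a ++ x :: x :: b)
  | C4T u v P0 P1 P2 a b c => valid_cd (fourT_word u v P0 P1 P2 a b c 0) /\ uniq [:: a; b; c]
  end.

Definition cdrel_sum (r : cdrel) : fsum :=
  match r with
  | CRot x s => [:: (1, x :: s); (-1, rcons s x)]
  | CRelab f s => [:: (1, s); (-1, map f s)]
  | C1T a b x => [:: (1, a ++ x :: x :: b)]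
  | C4T u v P0 P1 P2 a b c =>
      [:: (1, fourT_word u v P0 P1 P2 a b c 0); (1, fourT_word u v P0 P1 P2 a b c 1);
          (-1, fourT_word u v P0 P1 P2 a b c 2); (-1, fourT_word u v P0 P1 P2 a b c 3)]
  end.

Definition rel_comb (l : seq (rat * cdrel)) : fsum :=
  flatten [seq fscale x.1 (cdrel_sum x.2) | x <- l].

(* X (a combination of degree-n diagrams) lies in Chord_n(Z), the image of
   the integral span of degree-n chord diagrams in Chord(Q) *)
Definition in_chord_Z (n : nat) (X : fsum) : Prop :=
  exists z : seq (int * seq nat),
    all (fun y => valid_cd y.2 && (size y.2 == 2 * n)%N) z /\
    exists r : seq (rat * cdrel),
      List.Forall (fun y => cdrel_ok y.2) r /\
      forall w, fcoef X w = \sum_(y <- z | y.2 == w) (y.1)%:~R + fcoef (rel_comb r) w.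

(* an element of Chord(Q), given by its homogeneous components, lies in
   Chord_nat = sum_n D(n)^{-1} Chord_n(Z) *)
Definition in_chord_nat (I : nat -> fsum) : Prop :=
  forall n, in_chord_Z n (fscale (Dn n) (I n)).

(* Knot diagrams in general position, sliced (bottom to top) into       *)
(* elementary pieces; strands at a level are numbered 0,1,... from left.*)
Inductive piece :=
| PMax of nat            (* maximum joining strands i, i+1 *)
| PMin of nat            (* minimum creating new strands i, i+1 *)
| PCross of bool & nat   (* positive (true) / negative crossing of strands i, i+1 *)
| PAssoc of bool & nat.  (* c (true) / c^{-1} (false) on strands i, i+1, i+2 *)

Definition next_count (m : nat) (p : piece) : nat :=
  match p with
  | PMax _ => (m - 2)%N
  | PMin _ => m.+2
  | _ => m
  end.

Definition piece_ok (m : nat) (p : piece) : bool :=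
  match p with
  | PMax i => (i.+2 <= m)%N
  | PMin i => (i <= m)%N
  | PCross _ i => (i.+2 <= m)%N
  | PAssoc _ i => (i.+3 <= m)%N
  end.

Fixpoint wf_from (m : nat) (ps : seq piece) : bool :=
  match ps with
  | [::] => m == 0%N
  | p :: ps' => piece_ok m p && wf_from (next_count m p) ps'
  end.

Fixpoint counts (m : nat) (ps : seq piece) : seq nat :=
  match ps with
  | [::] => [:: m]
  | p :: ps' => m :: counts (next_count m p) ps'
  end.

(* number of strands entering piece k from below *)
Definition lev (ps : seq piece) (k : nat) : nat := nth 0%N (counts 0 ps) k.

(* segment (k,s) = strand s inside piece k (below its event).  A state
   (k,s,up) = segment (k,s) to be traversed next, upwards iff up. *)
Definition step (ps : seq piece) (st : nat * nat * bool) : nat * nat * bool :=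
  let: (k, s, up) := st in
  if up then
    match nth (PMin 0) ps k with
    | PMax i => if s == i then (k, i.+1, false) else if s == i.+1 then (k, i, false)
                else (k.+1, if (s < i)%N then s else (s - 2)%N, true)
    | PMin i => (k.+1, if (s < i)%N then s else s.+2, true)
    | PCross _ i => (k.+1, if s == i then i.+1 else if s == i.+1 then i else s, true)
    | PAssoc _ _ => (k.+1, s, true)
    end
  else
    match k with
    | 0 => st
    | k'.+1 =>
      match nth (PMin 0) ps k' with
      | PMin i => if s == i then (k, i.+1, true) else if s == i.+1 then (k, i, true)
                  else (k', if (s < i)%N then s else (s - 2)%N, false)
      | PMax i => (k', if (s < i)%N then s else s.+2, false)
      | PCross _ i => (k', if s == i then i.+1 else if s == i.+1 then i else s, false)
      | PAssoc _ _ => (k', s, false)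
      end
    end.

Definition nsegs (ps : seq piece) : nat := sumn (take (size ps) (counts 0 ps)).

(* start of the traversal; o chooses the orientation of the knot *)
Definition start (o : bool) : nat * nat * bool := (1%N, if o then 0%N else 1%N, true).

Definition tour (ps : seq piece) (o : bool) := traject (step ps) (start o) (nsegs ps).

(* (ps, o) is an oriented knot diagram: well-formed slicing starting and
   ending with no strands, whose closure is connected (one component):
   the traversal along the orientation visits every segment once. *)
Definition is_knot_diagram (ps : seq piece) (o : bool) : bool :=
  [&& wf_from 0 ps, (0 < size ps)%N,
      uniq [seq (x.1.1, x.1.2) | x <- tour ps o],
      all (fun x => (x.1.1 < size ps)%N && (x.1.2 < lev ps x.1.1)%N) (tour ps o)
    & iter (nsegs ps) (step ps) (start o) == start o].

(* The invariant.  A horizontal chord at a level is a pair of strand     *)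
(* positions; the decoration of piece k is a series in such chords,     *)
(* the first letter of a word being the lowest chord.                   *)
Fixpoint bseqs (j : nat) : seq (seq bool) :=
  if j is j'.+1 then [seq b :: s | b <- [:: false; true], s <- bseqs j'] else [:: [::]].

(* degree-j part of the decoration of a piece *)
Definition piece_terms (f : ser bool) (p : piece) (j : nat) : seq (rat * seq (nat * nat)) :=
  match p with
  | PMax _ | PMin _ => if j == 0%N then [:: (1, [::])] else [::]
  | PCross pos i =>
      [:: ((if pos then 1 else -1) ^+ j / (2 ^+ j * j`!%:R), nseq j (i, i.+1))]
  | PAssoc c i =>
      [seq ((if c then f else sinv f) u,
            [seq (if b then (i.+1, i.+2) else (i, i.+1)) | b <- u]) | u <- bseqs j]
  end.

Fixpoint terms (f : ser bool) (ps : seq piece) (n : nat)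
  : seq (rat * seq (seq (nat * nat))) :=
  match ps with
  | [::] => if n == 0%N then [:: (1, [::])] else [::]
  | p :: ps' =>
      flatten [seq [seq (a.1 * b.1, a.2 :: b.2) | a <- piece_terms f p j,
                                                  b <- terms f ps' (n - j)]
              | j <- iota 0 n.+1]
  end.

Definition touches (c : nat * nat) (s : nat) : bool := (c.1 == s) || (c.2 == s).

(* labels of chord endpoints met when traversing the state st *)
Definition emit (chs : seq (seq (nat * nat))) (st : nat * nat * bool) : seq nat :=
  let: (k, s, up) := st in
  let wk := nth [::] chs k in
  let off := sumn (map size (take k chs)) in
  let ls := [seq (off + l)%N | l <- iota 0 (size wk) & touches (nth (0%N, 0%N) wk l) s] in
  if up then ls else rev ls.

Definition downs (chs : seq (seq (nat * nat))) (st : nat * nat * bool) : nat :=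
  if st.2 then 0%N else size (emit chs st).

(* degree-n part of I_Phi(K): each choice of chords gives the chord
   diagram read along the oriented knot, with sign (-1)^(number of
   endpoints on downward (reversed) strands) *)
Definition I_Phi (f : ser bool) (ps : seq piece) (o : bool) (n : nat) : fsum :=
  [seq (x.1 * (-1) ^+ sumn (map (downs x.2) (tour ps o)),
        flatten (map (emit x.2) (tour ps o))) | x <- terms f ps n].

(* Main.v *)
Require Import Defs.
From HB Require Import structures.
From mathcomp Require Import all_boot all_order all_algebra.
From mathcomp Require Import ring lra zify.
Set Implicit Arguments. Unset Strict Implicit. Unset Printing Implicit Defensive.
Import Order.TTheory GRing.Theory Num.Theory.

Module M1.
Local Open Scope ring_scope.

Definition PI (p : nat) (q : rat) : Prop :=
  exists (a : int) (d : nat), ~~ (p %| d)%N /\ q * d%:R = a%:~R.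

Lemma PI_int p (z : int) : prime p -> PI p z%:~R.
Proof. move=> pp; exists z, 1%N; split; last by rewrite mulr1.
by rewrite dvdn1; apply/eqP => e; move: pp; rewrite e. Qed.

Lemma PI_nat p (k : nat) : prime p -> PI p k%:R.
Proof. by move=> pp; have := PI_int k pp. Qed.

Lemma PI_mul p a b : prime p -> PI p a -> PI p b -> PI p (a * b).
Proof.
move=> pp [x [d [hd ed]]] [y [e [he ee]]]; exists (x * y), (d * e)%N; split.
  by rewrite Euclid_dvdM // negb_or hd he.
by rewrite natrM intrM -ed -ee; ring.
Qed.

Lemma PI_add p a b : prime p -> PI p a -> PI p b -> PI p (a + b).
Proof.
move=> pp [x [d [hd ed]]] [y [e [he ee]]]; exists (x * e%:Z + y * d%:Z), (d * e)%N; split.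
  by rewrite Euclid_dvdM // negb_or hd he.
rewrite natrM intrD !intrM -ed -ee.
have -> : (e%:Z)%:~R = e%:R :> rat by [].
have -> : (d%:Z)%:~R = d%:R :> rat by [].
ring.
Qed.

Lemma PI_opp p a : PI p a -> PI p (- a).
Proof. move=> [x [d [hd ed]]]; exists (- x), d; split => //; by rewrite mulNr ed intrN. Qed.

Lemma PI_sum p (I : eqType) (r : seq I) (F : I -> rat) :
  prime p -> (forall i, i \in r -> PI p (F i)) -> PI p (\sum_(i <- r) F i).
Proof.
move=> pp; elim: r => [|i r IH] H; first by rewrite big_nil; exact: (PI_nat 0 pp).
rewrite big_cons; apply: PI_add => //; first by apply: H; rewrite inE eqxx.
by apply: IH => j hj; apply: H; rewrite inE hj orbT.
Qed.

Lemma padicE p q : prime p -> padic_int p q <-> PI p q.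
Proof.
move=> pp; split.
  move=> h; exists (numq q), `|denq q|%N; split => //.
  rewrite numqE; congr (_ * _).
  have -> : (`|denq q|%N)%:R = ((`|denq q|%N)%:Z)%:~R :> rat by [].
  by rewrite absz_denq.
move=> [a [d [hd ed]]]; rewrite /padic_int; apply/negP => hp.
have dpos : (0 < d)%N by case: d hd ed => //; rewrite dvdn0.
have E : numq q * d%:Z = a * denq q.
  apply/eqP; rewrite -(eqr_int rat) !intrM numqE -ed.
  have -> : (d%:Z)%:~R = d%:R :> rat by [].
  by apply/eqP; ring.
have : (`|denq q| %| `|numq q| * d)%N.
  have -> : (`|numq q| * d = `|(numq q * d%:Z)%R|)%N by rewrite abszM.
  by apply/dvdnP; exists `|a|%N; rewrite E abszM.
rewrite Gauss_dvdr; last by rewrite coprime_sym coprime_num_den.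
move=> h; move/negP: hd; apply; exact: dvdn_trans hp h.
Qed.

End M1.
Import M1.
Module M2.
Local Open Scope ring_scope.

Lemma int_of_PI q : (forall p, prime p -> PI p q) -> q = (numq q)%:~R.
Proof.
move=> H; suff e1 : denq q = 1 by rewrite numqE e1 mulr1.
apply/eqP; rewrite -absz_denq; apply/eqP; congr Posz.
have h0 : (0 < `|denq q|)%N by rewrite absz_gt0 denq_neq0.
case: (ltngtP `|denq q| 1) => // h; first by move: h h0; case: (`|denq q|)%N.
have [p pp pd] := pdivP h.
by have := (padicE q pp).2 (H p pp); rewrite /padic_int pd.
Qed.

Lemma bp_expr p n : (1 < p)%N ->
  p%:R / ((p%:R - 1) ^+ 2) * n%:R - 1 / (p%:R - 1) =
  (p%:R * n%:R - p%:R + 1) / ((p%:R - 1) ^+ 2) :> rat.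
Proof.
move=> hp; have h : (p%:R - 1 : rat) != 0.
  rewrite subr_eq0 pnatr_eq1; by case: p hp => // [[]].
by field.
Qed.

Lemma Pgt1 p : (1 < p)%N -> 1 < (p%:R : rat).
Proof. by move=> hp; rewrite ltr1n. Qed.

Lemma bp_ge p n (k : int) : (1 < p)%N ->
  (k <= bp p n) = (k%:~R * (p%:R - 1) ^+ 2 <= p%:R * n%:R - p%:R + 1 :> rat).
Proof.
move=> hp; rewrite /bp floor_ge_int bp_expr // ler_pdivlMr //.
have := Pgt1 hp => h1; rewrite exprn_gt0 // subr_gt0 //.
Qed.

Lemma bp_lt p n (k : int) : (1 < p)%N ->
  (bp p n < k) = (p%:R * n%:R - p%:R + 1 < k%:~R * (p%:R - 1) ^+ 2 :> rat).
Proof.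
move=> hp; rewrite ltNge bp_ge // -ltNge //.
Qed.

Definition ee (p n : nat) : nat := if n is 0 then 0%N else `|bp p n|%N.

Lemma bp_ge0 p n : (1 < p)%N -> (1 <= n)%N -> 0 <= bp p n.
Proof.
move=> hp hn; rewrite bp_ge // mul0r.
have h1 := Pgt1 hp; have h2 : (1 : rat) <= n%:R by rewrite ler1n.
nra.
Qed.

Lemma ee_spec p n : (1 < p)%N -> (1 <= n)%N -> bp p n = (ee p n)%:Z.
Proof. by move=> hp; case: n => // n _; rewrite /ee gez0_abs // bp_ge0. Qed.

Lemma ee_le p n : (1 < p)%N -> (1 <= n)%N ->
  (ee p n)%:R * (p%:R - 1) ^+ 2 <= p%:R * n%:R - p%:R + 1 :> rat.
Proof.
move=> hp hn; have := lexx (bp p n); rewrite {1}ee_spec // bp_ge //.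
Qed.

Lemma ee_super p a b : (1 < p)%N -> (ee p a + ee p b <= ee p (a + b))%N.
Proof.
move=> hp; case: a => [|a]; first by rewrite add0n.
case: b => [|b]; first by rewrite addn0 addn0.
have ha := ee_le hp (isT : (1 <= a.+1)%N); have hb := ee_le hp (isT : (1 <= b.+1)%N).
have : ((ee p a.+1 + ee p b.+1)%N%:Z <= bp p (a.+1 + b.+1)).
  rewrite bp_ge //; have h1 := Pgt1 hp.
  set x := (ee p a.+1)%:R in ha *; set y := (ee p b.+1)%:R in hb *.
  rewrite -[((_ + _)%N%:Z)%:~R]/((_ + _)%N%:R) natrD -/x -/y.
  set A := (a.+1)%:R in ha *; set B := (b.+1)%:R in hb *. nra.
by rewrite ee_spec ?addn_gt0 // lez_nat.
Qed.

Lemma ee_big p n : (1 < p)%N -> (n.+2 <= p)%N -> ee p n = 0%N.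
Proof.
move=> hp hn; case: n hn => [|n] hn //.
have : bp p n.+1 < 1.
  rewrite bp_lt // mul1r; have : (n.+1%:R + 1 : rat) < p%:R.
    by rewrite natr1 ltr_nat.
  move=> h; set P := p%:R in h *; set N := n.+1%:R in h *. have hP : 0 < P by have := Pgt1 hp; rewrite -/P; lra. have hN : 0 <= N by rewrite /N ler0n. have h3 : 0 < P * (P - N - 1) by apply: mulr_gt0; lra. nra.
by rewrite ee_spec // ltz_nat; case: ee.
Qed.

End M2.
Import M2.
Module M3.
Local Open Scope ring_scope.

Lemma logn_fact p j : logn p (j`!) = (\sum_(1 <= i < j.+1) logn p i)%N.
Proof.
elim: j => [|j IH]; first by rewrite big_geq // logn1.
rewrite factS lognM ?fact_gt0 // big_nat_recr //= IH addnC //.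
Qed.

Lemma count_mult j d : (0 < d)%N -> (\sum_(1 <= i < j.+1) (d %| i))%N = (j %/ d)%N.
Proof.
move=> hd; elim: j => [|j IH]; first by rewrite big_geq // div0n.
by rewrite big_nat_recr //= IH divnS // addnC.
Qed.

Lemma logn_fact_le p j : prime p ->
  (logn p (j`!) <= \sum_(1 <= k < j) j %/ p ^ k)%N.
Proof.
move=> pp; rewrite logn_fact.
apply: (@leq_trans (\sum_(1 <= i < j.+1) \sum_(1 <= k < j) (p ^ k %| i))%N).
  rewrite big_nat_cond [X in (_ <= X)%N]big_nat_cond; apply: leq_sum => i /andP[/andP[h1 h2] _].
  rewrite logn_count_dvd //.
  have hij : (i <= j)%N by rewrite -ltnS.
  case: (leqP i 1) => hi.
    rewrite big_geq //.
  rewrite (big_cat_nat (ltnW hi) hij) /=; exact: leq_addr.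
rewrite exchange_big_nat; apply: leq_sum => k _.
rewrite count_mult // expn_gt0 prime_gt0 //.
Qed.

Lemma geom_sum (P : rat) (j : rat) K : P != 0 ->
  (P - 1) * \sum_(1 <= k < K.+1) (j / P ^+ k) = j - j / P ^+ K.
Proof.
move=> hP; elim: K => [|K IH]; first by rewrite big_geq // expr0 divr1 subrr mulr0.
rewrite big_nat_recr //= mulrDr IH exprS.
have h2 : P ^+ K != 0 by rewrite expf_neq0.
field; rewrite h2 hP //.
Qed.

Lemma legendre p j : prime p -> (0 < j)%N -> ((p - 1) * logn p (j`!) < j)%N.
Proof.
move=> pp hj; have hp := prime_gt1 pp.
have hP : (1 : rat) < p%:R by rewrite ltr1n.
have hP0 : (p%:R : rat) != 0 by rewrite pnatr_eq0 -lt0n ltnW.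
case: j hj => // J _.
have h1 := logn_fact_le J.+1 pp.
suff : (((p - 1) * \sum_(1 <= k < J.+1) J.+1 %/ p ^ k)%N%:R < (J.+1)%:R :> rat).
  rewrite ltr_nat => h; apply: leq_ltn_trans h; by rewrite leq_mul2l h1 orbT.
rewrite natrM natrB //; last by apply: ltnW.
apply: (@le_lt_trans _ _ ((p%:R - 1) * \sum_(1 <= k < J.+1) ((J.+1)%:R / p%:R ^+ k))).
  apply: ler_wpM2l; first by lra.
  rewrite natr_sum; apply: ler_sum => k _.
  have hpk : (0 : rat) < p%:R ^+ k by rewrite exprn_gt0 //; lra.
  rewrite ler_pdivlMr // -natrX -natrM ler_nat; exact: leq_trunc_div.
rewrite geom_sum // gtrBl divr_gt0 //; last by rewrite exprn_gt0 //; lra.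
Qed.

End M3.
Import M3.
Module M4.
Local Open Scope ring_scope.

Definition PB p (q : rat) (k : nat) := PI p (q * p%:R ^+ k).

Lemma PB_mul p a b k1 k2 : prime p -> PB p a k1 -> PB p b k2 -> PB p (a * b) (k1 + k2).
Proof.
move=> pp h1 h2; rewrite /PB exprD.
have -> : a * b * (p%:R ^+ k1 * p%:R ^+ k2) = (a * p%:R ^+ k1) * (b * p%:R ^+ k2) by ring.
exact: PI_mul.
Qed.

Lemma PB_le p a k k' : prime p -> PB p a k -> (k <= k')%N -> PB p a k'.
Proof.
move=> pp h hk; rewrite /PB -(subnKC hk).
have -> : a * p%:R ^+ (k + (k' - k)) = (a * p%:R ^+ k) * (p ^ (k' - k))%N%:R.
  by rewrite exprD natrX mulrA.
by apply: PI_mul => //; apply: PI_nat.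
Qed.

Lemma PB_add p a b k : prime p -> PB p a k -> PB p b k -> PB p (a + b) k.
Proof. by move=> pp h1 h2; rewrite /PB mulrDl; apply: PI_add. Qed.

Lemma PB_opp p a k : PB p a k -> PB p (- a) k.
Proof. by move=> h; rewrite /PB mulNr; apply: PI_opp. Qed.

Lemma PB_sum p k (I : Type) (r : seq I) (P : pred I) (F : I -> rat) : prime p ->
  (forall i, P i -> PB p (F i) k) -> PB p (\sum_(i <- r | P i) F i) k.
Proof.
move=> pp H; apply: (big_ind (fun x => PB p x k)) => //.
- by rewrite /PB mul0r; apply: (PI_nat 0 pp).
- by move=> x y; apply: PB_add.
Qed.

Lemma PI_prod p (I : Type) (r : seq I) (P : pred I) (F : I -> rat) : prime p ->
  (forall i, P i -> PI p (F i)) -> PI p (\prod_(i <- r | P i) F i).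
Proof.
move=> pp H; apply: (big_ind (fun x => PI p x)) => //.
- by apply: (PI_nat 1 pp).
- by move=> x y; apply: PI_mul.
Qed.

Lemma PB_frac p (a m k : nat) : prime p -> ~~ (p %| m)%N -> (a <= k)%N ->
  PB p ((p ^ a * m)%N%:R)^-1 k.
Proof.
move=> pp hm hk; exists (p ^ (k - a))%N%:Z, m; split => //.
have hm0 : (m%:R : rat) != 0 by rewrite pnatr_eq0; apply/eqP => e; move: hm; rewrite e dvdn0.
have hp0 : (p%:R : rat) != 0 by rewrite pnatr_eq0 -lt0n prime_gt0.
rewrite -(subnKC hk) exprD natrM !natrX addKn.
have -> : ((p ^ (k - a))%N%:Z)%:~R = (p%:R ^+ (k - a) : rat) by rewrite -natrX.
by field; rewrite hm0 expf_neq0.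
Qed.

Lemma PI_sign p (s : rat) j : prime p -> (s = 1 \/ s = -1) -> PI p (s ^+ j).
Proof.
move=> pp hs; elim: j => [|j IH]; first by rewrite expr0; apply: (PI_nat 1 pp).
rewrite exprS; apply: PI_mul => //; case: hs => ->; first exact: (PI_nat 1 pp).
by apply: PI_opp; apply: (PI_nat 1 pp).
Qed.

Lemma ee_ge p j k : (1 < p)%N -> (1 <= j)%N ->
  (k%:R * (p%:R - 1) ^+ 2 <= p%:R * j%:R - p%:R + 1 :> rat) -> (k <= ee p j)%N.
Proof. by move=> hp hj h; rewrite -lez_nat -ee_spec // bp_ge. Qed.

Lemma cross_PB p j (s : rat) : prime p -> (s = 1 \/ s = -1) ->
  PB p (s ^+ j / (2 ^+ j * j`!%:R)) (ee p j).
Proof.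
move=> pp hs; have hp := prime_gt1 pp.
rewrite -[ee p j]add0n; apply: PB_mul => //.
  by rewrite /PB expr0 mulr1; apply: PI_sign.
case: j => [|J]; first by rewrite expr0 mul1r invr1 /PB /ee expr0 mulr1; apply: (PI_nat 1 pp).
have [m cm em] := pfactor_coprime pp (fact_gt0 J.+1).
have hv := legendre pp (isT : (0 < J.+1)%N).
set v := logn p J.+1`! in em hv.
have hm : ~~ (p %| m)%N by rewrite -prime_coprime.
have hP : (1 : rat) < p%:R by rewrite ltr1n.
have hJ : (0 : rat) <= J%:R by rewrite ler0n.
case: (eqVneq p 2) => [e2 | n2].
- have -> : (2 ^+ J.+1 * (J.+1)`!%:R : rat) = (p ^ (J.+1 + v) * m)%N%:R.
    by rewrite em e2 !natrM !natrX exprD; ring.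
  apply: PB_frac => //.
  apply: ee_ge => //; rewrite e2 in hv *.
  move: hv; rewrite subSS subn0 mul1n => hv.
  have : (v%:R : rat) <= J%:R by rewrite ler_nat -ltnS.
  rewrite natrD -!natr1 => h; lra.
- have -> : (2 ^+ J.+1 * (J.+1)`!%:R : rat) = (p ^ v * (2 ^ J.+1 * m))%N%:R.
    by rewrite em !natrM !natrX; ring.
  have hm2 : ~~ (p %| 2 ^ J.+1 * m)%N.
    rewrite Euclid_dvdM // negb_or hm andbT; rewrite Euclid_dvdX // andbT; apply/negP => h.
    by move: n2; rewrite (dvdn_prime2 pp (isT : prime 2)) in h; rewrite h.
  apply: PB_frac => //.
  apply: ee_ge => //.
  have h1 : ((p - 1) * v)%N%:R <= J%:R :> rat by rewrite ler_nat -ltnS.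
  rewrite natrM natrB ?(ltnW hp) // in h1.
  have h2 : 0 <= p%:R - 1 :> rat by lra.
  have := ler_wpM2l h2 h1.
  set P := p%:R in hP h1 h2 *; set V := v%:R in h1 *.
  rewrite -natr1 -/P => h; nra.
Qed.

End M4.
Import M4.
Module M5.
Local Open Scope ring_scope.

Lemma f_PB (f : ser bool) p w : natural_coeffs f -> prime p -> PB p (f w) (ee p (size w)).
Proof.
move=> [f0 hf] pp; case: w => [|b w].
  by rewrite f0 /PB /ee expr0 mulr1; apply: (PI_nat 1 pp).
have := hf p (b :: w) pp isT; rewrite (ee_spec (prime_gt1 pp)) // => h.
exact/(padicE _ pp).
Qed.

Lemma sinv_aux_PB (f : ser bool) p : natural_coeffs f -> prime p ->
  forall n w, (size w <= n)%N -> PB p (sinv_aux f n w) (ee p (size w)).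
Proof.
move=> hf pp; have f0 := hf.1.
have one : PB p 1 0 by rewrite /PB expr0 mulr1; apply: (PI_nat 1 pp).
elim => [|n IH] w hw.
  by case: w hw => // _; rewrite /= f0 invr1.
case: w hw => [|b w] hw; first by rewrite /= f0 invr1.
rewrite /= f0 invr1 mulN1r; apply: PB_opp; apply: PB_sum => // i _.
have hi : (i < (size w).+1)%N := ltn_ord i.
apply: (@PB_le _ _ (ee p i.+1 + ee p (size (drop i.+1 (b :: w))))) => //.
  apply: PB_mul => //; last first.
    by apply: IH; rewrite size_drop /=; move: hw; rewrite /=; lia.
  have := f_PB (take i.+1 (b :: w)) hf pp.
  by rewrite size_takel. 
rewrite size_drop /=; have := @ee_super p i.+1 ((size w).+1 - i.+1) (prime_gt1 pp).
by rewrite subnKC.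
Qed.

Lemma sinv_PB (f : ser bool) p w : natural_coeffs f -> prime p -> PB p (sinv f w) (ee p (size w)).
Proof. by move=> hf pp; apply: sinv_aux_PB. Qed.

Lemma Dn_PI p n x : prime p -> PB p x (ee p n) -> PI p (Dn n * x).
Proof.
move=> pp hx; have hp := prime_gt1 pp.
have fac : forall q : 'I_n.+2, prime q -> PI p ((q : nat)%:R ^ bp q n).
  move=> q hq; have hn : (1 <= n)%N.
    by have := ltn_ord q; have := prime_gt1 hq; lia.
  rewrite (ee_spec (prime_gt1 hq) hn) -exprnP -natrX; exact: PI_nat.
case: (ltnP p n.+2) => hpn.
  rewrite /Dn (bigD1 (Ordinal hpn)) //= mulrC mulrA.
  apply: PI_mul => //; last by apply: PI_prod => // q /andP[hq _]; apply: fac.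
  have hn : (1 <= n)%N by move: hpn hp; lia.
  by rewrite (ee_spec hp hn) -exprnP; exact: hx.
rewrite /PB ee_big // expr0 mulr1 in hx.
by apply: PI_mul => //; apply: PI_prod => // q hq; apply: fac.
Qed.

End M5.
Import M5.
Module M6.
Local Open Scope ring_scope.

Definition chord_ok (L : nat) (c : nat * nat) : bool :=
  [&& c.1 != c.2, (c.1 < L)%N & (c.2 < L)%N].

Lemma bseqs_size j u : u \in bseqs j -> size u = j.
Proof.
elim: j u => [|j IH] u /=; first by rewrite inE => /eqP ->.
by rewrite !mem_cat ?in_nil ?orbF => /orP [] /mapP [s hs ->] /=; rewrite (IH s hs).
Qed.

Lemma piece_good (f : ser bool) m pc j a : natural_coeffs f -> piece_ok m pc ->
  a \in piece_terms f pc j ->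
  [/\ size a.2 = j, all (chord_ok m) a.2 & forall p, prime p -> PB p a.1 (ee p j)].
Proof.
move=> hf; have one : forall p, prime p -> PB p 1 0.
  by move=> p pp; rewrite /PB expr0 mulr1; apply: (PI_nat 1 pp).
case: pc => [i|i|pos i|c i] /= hok.
- case: eqP => // -> ; rewrite inE => /eqP -> /=; split => //.
- case: eqP => // -> ; rewrite inE => /eqP -> /=; split => //.
- rewrite inE => /eqP -> /=; split; first by rewrite size_nseq.
    apply/allP => x; rewrite mem_nseq => /andP[_ /eqP ->]; rewrite /chord_ok /=.
    by apply/and3P; split => //; [rewrite neq_ltn ltnSn | apply: ltnW].
  move=> p pp; apply: cross_PB => //; by case: pos; [left | right].
- case/mapP => u hu -> /=; have su := bseqs_size hu; split.
  + by rewrite size_map.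
  + apply/allP => x /mapP [b _ ->]; rewrite /chord_ok.
    case: b => /=; apply/and3P; split; rewrite ?neq_ltn ?ltnSn //; lia.
  + move=> p pp; rewrite -su; case: c; [exact: f_PB | exact: sinv_PB].
Qed.

Lemma terms_cons (f : ser bool) pc ps n : terms f (pc :: ps) n =
  flatten [seq [seq (a.1 * b.1, a.2 :: b.2) | a <- piece_terms f pc j,
                                                  b <- terms f ps (n - j)]
              | j <- iota 0 n.+1].
Proof. by []. Qed.

Lemma terms_good (f : ser bool) : natural_coeffs f -> forall ps m n, wf_from m ps ->
  forall x, x \in terms f ps n ->
  [/\ size x.2 = size ps, sumn (map size x.2) = n,
      (forall k, all (chord_ok (nth 0%N (counts m ps) k)) (nth [::] x.2 k))
    & forall p, prime p -> PB p x.1 (ee p n)].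
Proof.
move=> hf; elim => [|pc ps IH] m n.
  move=> _ x; rewrite /=; case: eqP => // -> ; rewrite inE => /eqP -> /=; split => //.
    by move=> k; rewrite nth_nil.
  by move=> p pp; rewrite /PB expr0 mulr1; apply: (PI_nat 1 pp).
move=> hw x; have /andP [hok hwf] : piece_ok m pc && wf_from (next_count m pc) ps := hw; rewrite terms_cons => /flattenP [s /mapP [j hj ->]] /allpairsP [[a b] [ha hb ->]] /=.
rewrite mem_iota /= add0n ltnS in hj.
have [sa ca pa] := piece_good hf hok ha.
have [sb nb cb pb] := IH _ _ hwf _ hb.
split.
- by rewrite sb.
- by rewrite sa nb subnKC.
- by case => [|k] /=.
- move=> p pp; apply: (PB_le pp (PB_mul pp (pa p pp) (pb p pp))).
  have := @ee_super p j (n - j) (prime_gt1 pp); by rewrite subnKC.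
Qed.

End M6.
Import M6.
Module M7.
Local Open Scope nat_scope.

Definition off (chs : seq (seq (nat * nat))) k := sumn (map size (take k chs)).

Lemma offS chs k : k < size chs -> off chs k.+1 = off chs k + size (nth [::] chs k).
Proof. by move=> hk; rewrite /off (take_nth [::] hk) map_rcons sumn_rcons. Qed.

Lemma off_mono chs k1 k2 : k1 <= k2 -> off chs k1 <= off chs k2.
Proof.
by move=> h; rewrite /off -(subnKC h) takeD map_cat sumn_cat leq_addr.
Qed.

Lemma off_all chs : off chs (size chs) = sumn (map size chs).
Proof. by rewrite /off take_size. Qed.

Lemma nth_size_gt (chs : seq (seq (nat * nat))) k l :
  l < size (nth [::] chs k) -> k < size chs.
Proof. by move=> h; rewrite ltnNge; apply/negP => hk; move: h; rewrite nth_default. Qed.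

Lemma off_lt chs k l : l < size (nth [::] chs k) -> off chs k + l < off chs k.+1.
Proof. by move=> h; rewrite offS ?ltn_add2l // (nth_size_gt h). Qed.

Lemma off_inj chs k l k' l' : l < size (nth [::] chs k) -> l' < size (nth [::] chs k') ->
  off chs k' + l' = off chs k + l -> k' = k.
Proof.
move=> h h' e; case: (ltngtP k' k) => // hk.
- have := off_lt h'; have := off_mono chs hk; lia.
- have := off_lt h; have := off_mono chs hk; lia.
Qed.

Lemma count_and_pred1 (s : seq nat) l (P : pred nat) :
  count (fun l' => (l' == l) && P l') s = P l * count_mem l s.
Proof.
elim: s => [|x s IH] /=; first by rewrite muln0. rewrite IH; case: eqP => [->|]; last by rewrite andFb.
by case: (P l) => //=; rewrite ?mul1n ?muln0 //.
Qed.

Lemma emit_countE chs k l st : l < size (nth [::] chs k) ->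
  count_mem (off chs k + l) (emit chs st) =
  ((st.1.1 == k) && touches (nth (0, 0) (nth [::] chs k) l) st.1.2).
Proof.
move=> hl; case: st => [[k' s] up] /=.
have E : count_mem (off chs k + l) [seq off chs k' + l0 | l0 <- iota 0 (size (nth [::] chs k'))
           & touches (nth (0, 0) (nth [::] chs k') l0) s] =
         ((k' == k) && touches (nth (0, 0) (nth [::] chs k) l) s).
  rewrite count_map count_filter.
  case: (eqVneq k' k) => [-> | nk] /=.
    rewrite (eq_count (a2 := fun l' => (l' == l) && touches (nth (0, 0) (nth [::] chs k) l') s)).
      rewrite count_and_pred1 count_uniq_mem ?iota_uniq // mem_iota add0n hl andbT.
      by case: touches.
    by move=> l' /=; rewrite eqn_add2l.
  rewrite (eq_in_count (a2 := pred0)) ?count_pred0 // => l' /=.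
  rewrite mem_iota add0n /= => hl'.
  apply/negbTE/negP => /andP [/eqP e _]; move: nk; rewrite (off_inj hl hl' e) eqxx //.
by rewrite /emit; case: up => //; rewrite count_rev.
Qed.

End M7.
Import M7.
Module M8.
Local Open Scope nat_scope.

Definition prs (T : seq (nat * nat * bool)) := [seq (x.1.1, x.1.2) | x <- T].

Lemma size_counts m ps : size (counts m ps) = (size ps).+1.
Proof. by elim: ps m => //= p ps IH m; rewrite IH. Qed.

Lemma seg_cover ps o k s : is_knot_diagram ps o -> k < size ps -> s < lev ps k ->
  (k, s) \in prs (tour ps o).
Proof.
case/and5P => _ _ hu hall _ hk hs.
set A := [seq (k0, s0) | k0 <- iota 0 (size ps), s0 <- iota 0 (lev ps k0)].
have sub : {subset prs (tour ps o) <= A}.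
  move=> x /mapP [[[k0 s0] b] hin ->] /=.
  have /andP [h1 h2] := allP hall _ hin; rewrite /= in h1 h2.
  by apply/allpairsPdep; exists k0, s0; rewrite !mem_iota /= h1 h2.
have sz : size A <= size (prs (tour ps o)).
  rewrite size_allpairs_dep size_map size_traject /nsegs -(map_nth_iota0 0); last first.
    by rewrite size_counts.
  apply: eq_leq; congr sumn; apply: eq_map => i /=.
  by rewrite size_iota.
have [_ eqA] := uniq_min_size hu sub sz.
by rewrite eqA; apply/allpairsPdep; exists k, s; rewrite !mem_iota /= hk hs.
Qed.

End M8.
Import M8.
Module M9.
Local Open Scope nat_scope.

Definition word chs (T : seq (nat * nat * bool)) := flatten (map (emit chs) T).

Lemma label_count ps o chs k l : is_knot_diagram ps o -> size chs = size ps ->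
  (forall k, all (chord_ok (lev ps k)) (nth [::] chs k)) ->
  l < size (nth [::] chs k) ->
  count_mem (off chs k + l) (word chs (tour ps o)) = 2.
Proof.
move=> hK hs hc hl; have hk : k < size ps by rewrite -hs (nth_size_gt hl).
set c := nth (0, 0) (nth [::] chs k) l.
have /and3P [c12 c1 c2] : chord_ok (lev ps k) c by apply: (allP (hc k)); apply: mem_nth.
rewrite /word count_flatten -map_comp.
rewrite (eq_map (g := fun st => nat_of_bool ((st.1.1 == k) && touches c st.1.2))); last first.
  by move=> st /=; rewrite emit_countE.
rewrite sumn_count.
rewrite (eq_count (a2 := preim (fun x : nat * nat * bool => (x.1.1, x.1.2))
                      (predU (pred1 (k, c.1)) (pred1 (k, c.2))))); last first.
  move=> [[k' s] b] /=; rewrite /touches !xpair_eqE.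
  by case: (k' == k); rewrite //= ![s == _]eq_sym.
rewrite -count_map -/(prs _).
have := count_predUI (pred1 (k, c.1)) (pred1 (k, c.2)) (prs (tour ps o)).
rewrite (eq_count (a1 := predI _ _) (a2 := pred0)) ?count_pred0 ?addn0; last first.
  move=> x /=; apply/negbTE/negP => /andP [/eqP -> /eqP] [] /eqP; by rewrite (negbTE c12).
move=> ->.
have [_ _ hu _ _] := and5P hK.
by rewrite !count_uniq_mem // (seg_cover hK hk c1) (seg_cover hK hk c2).
Qed.

Lemma decomp chs i : i < sumn (map size chs) ->
  exists k l, l < size (nth [::] chs k) /\ i = off chs k + l.
Proof.
elim: chs i => [|w chs IH] i //= hi.
case: (ltnP i (size w)) => h.
  by exists 0, i; split => //; rewrite /off /= add0n.
have hi2 : i - size w < sumn (map size chs) by lia.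
have [k [l [hl e]]] := IH (i - size w) hi2.
exists k.+1, l; split => //; rewrite /off /=; rewrite /off in e; lia.
Qed.

Lemma word_range chs T x : x \in word chs T -> x < sumn (map size chs).
Proof.
case/flattenP => s /mapP [[[k' s'] b] _ ->] /=.
rewrite /emit; set L := [seq _ | _ <- _ & _].
have H : x \in L -> x < sumn (map size chs).
  case/mapP => l; rewrite mem_filter mem_iota /= add0n => /andP [_ hl] ->.
  apply: (leq_trans (off_lt hl)); rewrite -off_all; apply: off_mono.
  exact: (nth_size_gt hl).
by case: b => //; rewrite mem_rev.
Qed.

Lemma size_by_count (W : seq nat) n : all (fun x => x < n) W ->
  size W = \sum_(i < n) count_mem (i : nat) W.
Proof.
elim: W => [|x W IH] /=; first by rewrite big1.
case/andP => hx hW; rewrite IH // big_split /=.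
rewrite [X in _ = X + _](_ : _ = 1) ?add1n //.
rewrite (bigD1 (Ordinal hx)) //= eqxx big1 //= => i /negP hi.
by apply/eqP; rewrite eqb0; apply/negP => /eqP e; apply: hi; apply/eqP/val_inj.
Qed.

Lemma word_good ps o chs n : is_knot_diagram ps o -> size chs = size ps ->
  sumn (map size chs) = n ->
  (forall k, all (chord_ok (lev ps k)) (nth [::] chs k)) ->
  valid_cd (word chs (tour ps o)) && (size (word chs (tour ps o)) == 2 * n).
Proof.
move=> hK hs hn hc.
have cnt : forall i, i < n -> count_mem i (word chs (tour ps o)) = 2.
  move=> i hi; rewrite -hn in hi; have [k [l [hl ->]]] := decomp hi.
  exact: label_count.
have rng : all (fun x => x < n) (word chs (tour ps o)).
  by apply/allP => x hx; rewrite -hn; apply: word_range hx.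
apply/andP; split.
  apply/allP => x hx; apply/eqP; apply: cnt; exact: (allP rng).
rewrite (size_by_count rng) (eq_bigr (fun _ => 2)); last by move=> i _; apply: cnt.
by rewrite sum_nat_const card_ord mulnC.
Qed.

End M9.
Import M9.
Local Open Scope ring_scope.

Theorem mainTheorem9 (Phi : ser bool) (ps : seq piece) (o : bool) :
  natural_associator Phi -> is_knot_diagram ps o -> in_chord_nat (I_Phi Phi ps o).
Proof.
move=> [_ hf] hK n.
have [hwf _ _ _ _] := and5P hK.
set X := fscale (Dn n) (I_Phi Phi ps o n).
have memX : forall y, y \in X -> exists x, x \in terms Phi ps n /\
   y = (Dn n * (x.1 * (-1) ^+ sumn (map (downs x.2) (tour ps o))),
        flatten (map (emit x.2) (tour ps o))).
  by move=> y /mapP [y0 /mapP [x hx ->] ->]; exists x.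
have intX : forall y, y \in X -> y.1 = (numq y.1)%:~R.
  move=> y /memX [x [hx ->]] /=; apply: int_of_PI => p pp; apply: Dn_PI => //.
  have [_ _ _ hp] := terms_good hf hwf hx.
  rewrite -[ee p n]addn0; apply: (PB_mul pp (hp p pp)).
  rewrite /PB expr0 GRing.mulr1; apply: PI_sign => //; by right.
exists [seq (numq y.1, y.2) | y <- X]; split.
  rewrite all_map; apply/allP => y /memX [x [hx ->]] /=.
  have [h1 h2 h3 _] := terms_good hf hwf hx.
  exact: word_good.
exists [::]; split; first by constructor.
move=> w; rewrite /rel_comb /= /fcoef big_nil GRing.addr0 big_map.
rewrite big_seq_cond [RHS]big_seq_cond; apply: eq_bigr => y /andP [hy _]; exact: intX.
Qed.
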